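(* Let $B$ be a minimum-weight basis of the weighted uncertainty matroid $\mathcal{M}=(E,\mathcal{I},A,w)$ and let $Q$ be a certificate that verifies $B$. Let $e\notin B$ and $e'\in B$ with $L_e=L_{e'}=w_e=w_{e'}$ be such that $e'\in C_e$, where $C_e$ is the fundamental circuit of $e$ with respect to $B$. Then $Q'=(Q\setminus\{e'\})\cup\{e\}$ is a certificate that verifies $B'=(B\cup\{e\})\setminus\{e'\}$.
   Context: A weighted uncertainty matroid $\mathcal{M}=(E,\mathcal{I},A,w)$ consists of a matroid $M=(E,\mathcal{I})$ on a finite set $E$, for each $e\in E$ a non-empty finite union $A_e$ of bounded real intervals (each open or closed), and a weight $w_e\in A_e$. Let $L_e=\inf A_e$, $U_e=\sup A_e$. A minimum-weight basis is a basis of $M$ minimizing the sum of weights. A weight assignment is $w^*:E\to\mathbb{R}$ with $w^*_e\in A_e$, consistent with $Q$ if $w^*_e=w_e$ for $e\in Q$. $Q$ verifies a basis $B$ (is a certificate for $B$) if for every weight assignment consistent with $Q$, $B$ is a minimum-weight basis with respect to it. For a basis $B$ and $f\notin B$, the fundamental circuit of $f$ is the unique circuit contained in $B\cup\{f\}$. *)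

(* Defs.v *)
From HB Require Import structures.
From mathcomp Require Import all_boot all_order all_algebra.
From mathcomp Require Import reals.
Set Implicit Arguments. Unset Strict Implicit. Unset Printing Implicit Defensive.
Import Order.TTheory GRing.Theory Num.Theory.
Local Open Scope ring_scope.

Record matroid (E : finType) := Matroid {
  indep : {set E} -> bool;
  indep0 : indep set0;
  indep_sub : forall I J : {set E}, J \subset I -> indep I -> indep J;
  indep_aug : forall I J : {set E}, indep I -> indep J -> (#|I| < #|J|)%N ->
     exists2 x, x \in J :\: I & indep (x |: I)
}.

Definition is_basis (E : finType) (M : matroid E) (B : {set E}) : Prop :=
  indep M B /\ forall X : {set E}, B \subset X -> indep M X -> X = B.

Definition is_circuit (E : finType) (M : matroid E) (C : {set E}) : Prop :=
  ~~ indep M C /\ forall x, x \in C -> indep M (C :\ x).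

Record bitv (R : realType) := BItv { lo : R; hi : R; lo_closed : bool; hi_closed : bool }.

Definition in_bitv (R : realType) (I : bitv R) (x : R) : bool :=
  (if lo_closed I then lo I <= x else lo I < x) &&
  (if hi_closed I then x <= hi I else x < hi I).

Definition in_area (R : realType) (A : seq (bitv R)) (x : R) : bool :=
  has (fun I => in_bitv I x) A.

Record wumatroid (R : realType) (E : finType) := WUMatroid {
  wm_M : matroid E;
  wm_A : E -> seq (bitv R);
  wm_w : E -> R;
  wm_A_nonempty : forall e, exists x, in_area (wm_A e) x;
  wm_w_in : forall e, in_area (wm_A e) (wm_w e)
}.

Definition lowL (R : realType) (E : finType) (W : wumatroid R E) (e : E) : R :=
  inf (fun x : R => is_true (in_area (wm_A W e) x)).

Definition weight_of (R : realType) (E : finType) (ws : E -> R) (B : {set E}) : R :=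
  \sum_(e in B) ws e.

Definition min_weight_basis (R : realType) (E : finType) (M : matroid E)
    (ws : E -> R) (B : {set E}) : Prop :=
  is_basis M B /\ forall B' : {set E}, is_basis M B' -> weight_of ws B <= weight_of ws B'.

Definition consistent (R : realType) (E : finType) (W : wumatroid R E)
    (Q : {set E}) (ws : E -> R) : Prop :=
  (forall e, in_area (wm_A W e) (ws e)) /\ (forall e, e \in Q -> ws e = wm_w W e).

Definition verifies (R : realType) (E : finType) (W : wumatroid R E)
    (Q B : {set E}) : Prop :=
  forall ws : E -> R, consistent W Q ws -> min_weight_basis (wm_M W) ws B.

(* Main.v *)
Require Import Defs.
From HB Require Import structures.
From mathcomp Require Import all_boot all_order all_algebra.
From mathcomp Require Import reals.
From mathcomp Require classical_sets.
Import Order.TTheory GRing.Theory Num.Theory.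
Local Open Scope ring_scope.

Lemma area_lb_ex (R : realType) (A : seq (bitv R)) :
  exists m : R, forall x, in_area A x -> m <= x.
Proof.
elim: A => [|I A [m Hm]]; first by exists 0.
exists (Num.min (lo I) m) => x /= /orP [H|H].
- rewrite ge_min; apply/orP; left.
  move: H; rewrite /in_bitv; case: (lo_closed I) => /andP [H _] //.
  exact: ltW.
- by rewrite ge_min (Hm x H) orbT.
Qed.

Lemma lowL_le (R : realType) (E : finType) (W : wumatroid R E) f x :
  in_area (wm_A W f) x -> lowL W f <= x.
Proof.
move=> Hx; rewrite /lowL.
have [m Hm] := @area_lb_ex R (wm_A W f).
have hl : classical_sets.has_lbound (fun x : R => is_true (in_area (wm_A W f) x)).
  by exists m => y Hy; exact: Hm.
exact: (ge_inf hl).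
Qed.

Lemma exchange (E : finType) (M : matroid E) (B C : {set E}) (e e' : E) :
  is_basis M B -> e \notin B -> e' \in B -> is_circuit M C ->
  C \subset e |: B -> e' \in C -> is_basis M ((B :|: [set e]) :\ e').
Proof.
move=> [indB maxB] eB e'B [depC circC] CS e'C.
have indI : indep M (C :\ e') by exact: circC e' e'C.
have Ssub : (C :\ e') \subset e |: B.
  by apply/subsetP => x /setD1P [_ xC]; apply: (subsetP CS).
have cardB' : #|(B :|: [set e]) :\ e'| = #|B|.
  rewrite setUC.
  have := cardsD1 e' (e |: B); rewrite in_setU1 e'B orbT.
  by rewrite cardsU1 eB /= add1n => /eqP; rewrite eqSS => /eqP <-.
pose P := fun J : {set E} => [&& indep M J, (C :\ e') \subset J & J \subset e |: B].
have P0 : P (C :\ e') by rewrite /P indI subxx Ssub.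
case: (@arg_maxnP _ (C :\ e') P (fun J : {set E} => #|J|) P0) => J /and3P [indJ IJ JS] maxJ.
have cardJ : (#|B| <= #|J|)%N.
  rewrite leqNgt; apply/negP => lt.
  have [x /setDP [xB xJ] indx] := indep_aug indJ indB lt.
  have Px : P (x |: J).
    rewrite /P indx (subset_trans IJ (subsetUr _ _)) /=.
    apply/subsetP => y; rewrite in_setU1 => /orP [/eqP ->|yJ].
      by rewrite in_setU1 xB orbT.
    exact: (subsetP JS).
  have := maxJ _ Px; rewrite cardsU1 xJ add1n.
  by rewrite /= ltnn.
have e'J : e' \notin J.
  apply/negP => e'J; move/negP: depC; apply; apply: (indep_sub _ indJ).
  apply/subsetP => c cC; case: (eqVneq c e') => [->//|ne].
  by apply: (subsetP IJ); rewrite in_setD1 ne cC.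
have JB' : J \subset (B :|: [set e]) :\ e'.
  apply/subsetP => x xJ; rewrite in_setD1 in_setU in_set1.
  have := subsetP JS x xJ; rewrite in_setU1 => /orP [->|->]; rewrite ?orbT;
  by case: eqVneq xJ e'J => [->->|].
have JeqB' : J = (B :|: [set e]) :\ e'.
  by apply/eqP; rewrite eqEcard JB' cardB'.
have indB' : indep M ((B :|: [set e]) :\ e') by rewrite -JeqB'.
split => // X B'X indX.
have cX : (#|X| <= #|B|)%N.
  rewrite leqNgt; apply/negP => lt.
  have [x /setDP [xX xB] indx] := indep_aug indB indX lt.
  have := maxB _ (subsetUr _ _) indx => H.
  by move/negP: xB; apply; rewrite -H in_setU1 eqxx.
apply/eqP; rewrite eq_sym eqEcard B'X cardB' cX.
by [].
Qed.

Theorem lemma11 (R : realType) (E : finType) (W : wumatroid R E)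
    (B Q C : {set E}) (e e' : E) :
  min_weight_basis (wm_M W) (wm_w W) B ->
  verifies W Q B ->
  e \notin B -> e' \in B ->
  lowL W e = lowL W e' -> lowL W e' = wm_w W e -> wm_w W e = wm_w W e' ->
  (* C is the fundamental circuit of e w.r.t. B *)
  is_circuit (wm_M W) C -> C \subset e |: B ->
  e' \in C ->
  verifies W ((Q :\ e') :|: [set e]) ((B :|: [set e]) :\ e').
Proof.
move=> [bB _] ver eB e'B _ Le'w wee' circ CS e'C ws [areaws Qws].
have nee' : e != e'.
  by apply/eqP => h; move: eB; rewrite h e'B.
pose ws2 := fun f => if f == e' then wm_w W e' else ws f.
have cons2 : consistent W Q ws2.
  split => f; rewrite /ws2; case: eqP => [->|ne].
  - exact: wm_w_in.
  - exact: areaws.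
  - by [].
  - move=> fQ; apply: Qws; rewrite in_setU in_setD1 fQ andbT.
    by apply/orP; left; apply/eqP.
have [_ minB] := ver ws2 cons2.
have bB' := @exchange _ _ B C e e' bB eB e'B circ CS e'C.
have ewse : ws e = wm_w W e by apply: Qws; rewrite in_setU set11 orbT.
have ge f : ws2 f <= ws f.
  rewrite /ws2; case: eqP => [->|_] //.
  by rewrite -wee' -Le'w; apply: lowL_le.
have E1 : weight_of ws ((B :|: [set e]) :\ e') = weight_of ws2 ((B :|: [set e]) :\ e').
  apply: eq_bigr => f; rewrite in_setD1 /ws2 => /andP [/negPf -> _] //.
have E2 : weight_of ws2 ((B :|: [set e]) :\ e') = weight_of ws2 B.
  rewrite /weight_of setUC.
  have h1 : \sum_(i in [set e] :|: B) ws2 i = ws2 e' + \sum_(i in ([set e] :|: B) :\ e') ws2 i.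
    by rewrite (big_setD1 e') // in_setU e'B orbT.
  have h2 : \sum_(i in [set e] :|: B) ws2 i = ws2 e + \sum_(i in B) ws2 i.
    by rewrite big_setU1.
  have : ws2 e' + \sum_(i in ([set e] :|: B) :\ e') ws2 i = ws2 e + \sum_(i in B) ws2 i.
    by rewrite -h1 -h2.
  have -> : ws2 e = ws2 e' by rewrite /ws2 (negPf nee') eqxx ewse.
  by move/addrI.
split => // X bX.
rewrite E1 E2; apply: le_trans (minB X bX) _.
by apply: ler_sum => f _; apply: ge.
Qed.
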